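(* For any integers $k, m \ge 1$, \[ B(k,m) = \sum_{a=1}^{2k-m-1}\left[\binom{m}{k-a} - \binom{m}{k}\right] \] (an empty sum being $0$). Consequently, for $2 \le k \le m$, the number of Grassmannian permutations of $[m]$ avoiding $\operatorname{id}_k=12\cdots k$ equals this sum.
   Context: For $k \ge 1$ and $m \ge 0$, $B(k,m)$ is the number of binary words of length $m$ that avoid (i.e. do not contain as a not-necessarily-contiguous subsequence) every word $0^j1^{k-j}$ for $j \in \{0,1,\dots,k\}$. A permutation is Grassmannian if it has at most one descent; pattern containment/avoidance is the usual notion for permutations. Binomial coefficients $\binom{p}{q}$ are $0$ when $q<0$ or $q>p$. *)

(* Defs.v *)
From mathcomp Require Import all_boot all_order all_algebra all_fingroup.
Set Implicit Arguments. Unset Strict Implicit. Unset Printing Implicit Defensive.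
Import GRing.Theory Num.Theory.

(* Binomial coefficient with integer lower index: 0 when q < 0
   (and 'C(p, q) = 0 for q > p already). *)
Definition binz (p : nat) (q : int) : nat :=
  match q with Posz n => 'C(p, n) | Negz _ => 0%N end.

(* Binary words of length m avoiding every 0^j 1^(k-j), j = 0..k
   (false = 0, true = 1; containment = not-necessarily-contiguous subsequence). *)
Definition binpat (k j : nat) : seq bool := nseq j false ++ nseq (k - j) true.

Definition avoids_all_binpats (k : nat) (w : seq bool) : bool :=
  [forall j : 'I_k.+1, ~~ subseq (binpat k j) w].

Definition B (k m : nat) : nat :=
  #|[set w : m.-tuple bool | avoids_all_binpats k w]|.

Definition Bsum (k m : nat) : int :=
  (\sum_(1 <= a < (2 * k - m)%N)
     ((binz m (k%:Z - a%:Z))%:Z - ('C(m, k))%:Z))%R.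

Definition order_iso (t p : seq nat) : bool :=
  (size t == size p) &&
  [forall i : 'I_(size p), forall j : 'I_(size p),
     (nth 0 t i < nth 0 t j) == (nth 0 p i < nth 0 p j)].

Definition contains (p w : seq nat) : bool :=
  [exists msk : (size w).-tuple bool, order_iso (mask msk w) p].

Definition avoids (p w : seq nat) : bool := ~~ contains p w.

Definition perm_word (m : nat) (s : {perm 'I_m}) : seq nat :=
  [seq (s i).+1 | i <- enum 'I_m].

Definition descents (w : seq nat) : nat :=
  count (fun i => nth 0 w i.+1 < nth 0 w i) (iota 0 (size w).-1).

Definition grassmannian (m : nat) (s : {perm 'I_m}) : bool :=
  descents (perm_word s) <= 1.

Definition id_pat (k : nat) : seq nat := iota 1 k.

(* Main.v *)
Require Import Defs.
From mathcomp Require Import all_boot all_order all_algebra all_fingroup.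
From mathcomp Require Import zify.
Set Implicit Arguments. Unset Strict Implicit. Unset Printing Implicit Defensive.

Lemma card_set_sum (n : nat) (P : seq bool -> bool) :
  #|[set w : n.-tuple bool | P w]| = \sum_(w : n.-tuple bool) (P w : nat).
Proof.
rewrite -sum1_card big_mkcond /=; apply: eq_bigr => w _; rewrite inE; by case: (P w).
Qed.

Lemma card_tupleS m (P : seq bool -> bool) :
  #|[set w : m.+1.-tuple bool | P w]| =
  #|[set w : m.-tuple bool | P (false :: w)]| + #|[set w : m.-tuple bool | P (true :: w)]|.
Proof.
rewrite !card_set_sum.
rewrite (reindex (fun x : bool * m.-tuple bool => [tuple of x.1 :: x.2])) /=.
  rewrite -(pair_big xpredT xpredT (fun b (t : m.-tuple bool) => (P (b :: t) : nat))) /=.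
  rewrite big_bool /= addnC (card_set_sum _ (fun w => P (false :: w))) (card_set_sum _ (fun w => P (true :: w))) /=. done.
exists (fun t : m.+1.-tuple bool => (thead t, [tuple of behead t])).
  by move=> [b t] _ /=; congr (_, _); apply: val_inj.
move=> t _ /=; apply: val_inj => /=.
by case: t => [[|b s] //=].
Qed.

Lemma card_tuple0 (P : seq bool -> bool) :
  #|[set w : 0.-tuple bool | P w]| = P [::].
Proof.
rewrite card_set_sum (big_pred1 [tuple]) //= => t.
by rewrite [t]tuple0 /= eqxx.
Qed.

Definition Fw (w : seq bool) (p : nat) : nat := count negb (take p w) + count id (drop p w).
Definition Big (k : nat) (w : seq bool) : bool :=
  has (fun p => k <= Fw w p) (iota 0 (size w).+1).

Lemma Big0 w : Big 0 w.
Proof. by rewrite /Big /=. Qed.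

Lemma Big_nil k : Big k [::] = (k == 0).
Proof. by rewrite /Big /= /Fw /= orbF leqn0. Qed.

Lemma iotaS0 n : iota 0 n.+1 = 0 :: map S (iota 0 n).
Proof. by rewrite /= -(iotaDl 1). Qed.

Lemma hasC (T : Type) (P : pred T) x s : has P (x :: s) = P x || has P s.
Proof. by []. Qed.

Lemma Big_false k w : Big k (false :: w) = (k == 0) || Big k.-1 w.
Proof.
rewrite /Big [size _]/= iotaS0 hasC has_map.
have -> : has (preim S (fun p => k <= Fw (false :: w) p)) (iota 0 (size w).+1)
   = has (fun p => k <= (Fw w p).+1) (iota 0 (size w).+1).
  by apply: eq_in_has => p _ /=.
have -> : Fw (false :: w) 0 = Fw w 0 by rewrite /Fw !take0 !drop0.
case: k => [|k]; first by [].
rewrite [_.+1.-1]/=.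
have -> : has (fun p => k.+1 <= (Fw w p).+1) (iota 0 (size w).+1)
   = has (fun p => k <= Fw w p) (iota 0 (size w).+1) by [].
apply/idP/idP.
  case/orP => [Hk|->]; last by rewrite orbT.
  apply/orP; right; apply/hasP; exists 0; first by rewrite mem_iota.
  exact: ltnW.
by case/orP => [//|->]; rewrite orbT.
Qed.

Lemma Big_true k w : Big k (true :: w) = (k <= (count id w).+1) || Big k w.
Proof.
rewrite /Big [size _]/= iotaS0 hasC has_map.
congr (_ || _); by apply: eq_in_has => p _ /=.
Qed.

Lemma subseq_nseqT n w : subseq (nseq n true) w = (n <= count id w).
Proof.
elim: w n => [|b w IH] [|n] //=.
case: b => /=; first by rewrite IH.
by rewrite -(IH n.+1).
Qed.

Definition Pb (k : nat) (w : seq bool) : bool :=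
  has (fun j => subseq (binpat k j) w) (iota 0 k.+1).

Lemma avoids_Pb k w : avoids_all_binpats k w = ~~ Pb k w.
Proof.
apply/forallP/hasPn => [H j|H j].
  rewrite mem_iota /= => Hj; exact: (H (Ordinal Hj)).
by apply: H; rewrite mem_iota /=.
Qed.

Lemma binpatS k j : binpat k.+1 j.+1 = false :: binpat k j.
Proof. by rewrite /binpat /= subSS. Qed.

Lemma binpat0 k : binpat k 0 = nseq k true.
Proof. by rewrite /binpat subn0. Qed.

Lemma Pb_nil k : Pb k [::] = (k == 0).
Proof.
case: k => [|k] //=; rewrite /Pb iotaS0 hasC has_map binpat0 /=.
apply/hasPn => j _ /=. done.
Qed.

Lemma Pb_false k w : Pb k (false :: w) = (k == 0) || Pb k.-1 w.
Proof.
case: k => [|k]; first by [].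
rewrite /Pb iotaS0 hasC has_map binpat0.
have -> : has (preim S (fun j => subseq (binpat k.+1 j) (false :: w))) (iota 0 k.+1)
  = has (fun j => subseq (binpat k j) w) (iota 0 k.+1).
  by apply: eq_in_has => j _.
have -> : subseq (nseq k.+1 true) (false :: w) = (k.+1 <= count id w)
  by rewrite -subseq_nseqT.
idtac.
apply/idP/idP; last by case/orP => [//|->]; rewrite orbT.
case/orP => [Hk|//].
apply/hasP; exists 0; first by rewrite mem_iota.
by rewrite binpat0 subseq_nseqT ltnW.
Qed.

Lemma Pb_true k w : Pb k (true :: w) = (k <= (count id w).+1) || Pb k w.
Proof.
case: k => [|k]; first by [].
rewrite /Pb iotaS0 hasC has_map hasC has_map !binpat0.
have -> : has (preim S (fun j => subseq (binpat k.+1 j) (true :: w))) (iota 0 k.+1)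
  = has (preim S (fun j => subseq (binpat k.+1 j) w)) (iota 0 k.+1).
  by apply: eq_in_has => j _.
have -> : subseq (nseq k.+1 true) (true :: w) = (k <= count id w)
  by rewrite -subseq_nseqT.
rewrite !subseq_nseqT.
rewrite ltnS; case Hk: (k <= count id w) => //. have -> : (k < count id w) = false by lia. done.
Qed.

Lemma Pb_Big k w : Pb k w = Big k w.
Proof.
elim: w k => [|b w IH] k; first by rewrite Pb_nil Big_nil.
by case: b; rewrite ?Pb_true ?Big_true ?Pb_false ?Big_false IH.
Qed.

Lemma card_set_ext n (P Q : seq bool -> bool) : (forall w, P w = Q w) ->
  #|[set w : n.-tuple bool | P w]| = #|[set w : n.-tuple bool | Q w]|.
Proof. by move=> H; apply: eq_card => w; rewrite !inE H. Qed.

Lemma card_set_false n : #|[set w : n.-tuple bool | false]| = 0.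
Proof. by apply: eq_card0 => w; rewrite inE. Qed.

Lemma card_set_0 n (P : seq bool -> bool) : (forall w, P w = false) ->
  #|[set w : n.-tuple bool | P w]| = 0.
Proof. by move=> H; apply: eq_card0 => w; rewrite inE H. Qed.

Definition cnt m o h := #|[set w : m.-tuple bool | (count id w == o) && ~~ Big h.+1 w]|.

Lemma cntS m o h : cnt m.+1 o h =
  (if h is h'.+1 then cnt m o h' else 0) + (if (0 < o) && (o <= h) then cnt m o.-1 h else 0).
Proof.
rewrite /cnt (card_tupleS m (fun w => (count id w == o) && ~~ Big h.+1 w)); congr (_ + _).
  case: h => [|h].
    by apply: (@card_set_0 m (fun w => (count id (false :: w) == o) && ~~ Big 1 (false :: w))) => w; rewrite Big_false /= andbF.
  by apply: eq_card => w; rewrite !inE Big_false.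
case: o => [|o] /=.
  by apply: eq_card0 => w; rewrite !inE.
case: ifP => Ho.
  apply: eq_card => w; rewrite !inE; rewrite Big_true eqSS negb_or.
  by case: eqP => //= ->; rewrite -ltnNge ltnS Ho.
apply: eq_card0 => w; rewrite !inE.
rewrite Big_true eqSS negb_or; case: eqP => //= ->; by rewrite -ltnNge ltnS Ho.
Qed.

Lemma cnt0 o h : cnt 0 o h = (o == 0).
Proof. rewrite /cnt (card_tuple0 (fun w => (count id w == o) && ~~ Big h.+1 w)) Big_nil. by case: o. Qed.

Lemma cnt_closed m o h :
  cnt m o h + (if (o <= h) && (m - o <= h) then 'C(m, h.+1) else 0)
  = (if (o <= h) && (m - o <= h) then 'C(m, o) else 0).
Proof.
elim: m o h => [|m IH] o h.
  rewrite cnt0 sub0n leq0n andbT bin0n; case: o => [|o] //=.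
rewrite cntS.
case: o => [|o]; case: h => [|h] /=.
- done.
- have := IH 0 h; rewrite !subn0 /= bin0.
  case: (leqP m h) => Hmh /=.
    rewrite ltnS Hmh bin0 (@bin_small m h.+1) ?ltnS // (@bin_small m.+1 h.+2) ?ltnS //; lia.
  rewrite ltnS leqNgt Hmh /=; lia.
- by rewrite addn0.
- rewrite !ltnS subSS !binS.
  have := IH o.+1 h; have := IH o h.+1.
  case: (leqP o h) => Hoh /=; last first.
    have -> : (o < h) = false by lia.
    move=> _ /=; lia.
  case: (leqP (m - o) h.+1) => Hm /=; last first.
    have -> : (m - o.+1 <= h) = false by lia.
    rewrite !andbF /=; lia.
  rewrite (leqW Hoh) /=.
  have -> : m - o.+1 <= h by lia.
  case: (ltnP o h) => Ho /=.
    lia.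
  have -> : o = h by lia.
  rewrite /= ?ltnn ?andbT /=; lia.
Qed.

Lemma card_split m (Q : seq bool -> bool) :
  #|[set w : m.-tuple bool | Q w]| =
  \sum_(o < m.+1) #|[set w : m.-tuple bool | (count id w == o) && Q w]|.
Proof.
transitivity (\sum_(o < m.+1) \sum_(w : m.-tuple bool) ((count id w == o) && Q w : nat)); last first.
  by apply: eq_bigr => o _; rewrite (card_set_sum _ (fun w => (count id w == o) && Q w)).
rewrite card_set_sum exchange_big /=; apply: eq_bigr => w _.
have Hc : count id w < m.+1 by rewrite ltnS -{2}(size_tuple w) count_size.
rewrite (bigD1 (Ordinal Hc)) //= eqxx /= big1 ?addn0 // => o Ho.
case: eqP => //= E; case/eqP: Ho; apply: val_inj => /=; by rewrite E.
Qed.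

Lemma binz_sub m n1 n2 : binz m (Posz n1 - Posz n2)%R = if n2 <= n1 then 'C(m, n1 - n2) else 0.
Proof.
case: leqP => H; first by rewrite subzn.
have -> : (Posz n1 - Posz n2)%R = Negz (n2 - n1).-1.
  rewrite NegzE prednK ?subn_gt0 // -subzn ?(ltnW H) //; lia.
by [].
Qed.

Open Scope ring_scope.
Lemma part1 k m : (1 <= k)%N -> Posz (B k m) = Bsum k m.
Proof.
case: k => [//|k] _.
have E : B k.+1 m = (\sum_(o < m.+1) cnt m o k)%N.
  rewrite /B (card_split m (fun w => avoids_all_binpats k.+1 w)).
  apply: eq_bigr => o _; rewrite /cnt; apply: eq_card => w; by rewrite !inE avoids_Pb Pb_Big.
rewrite E (big_morph Posz PoszD (erefl 0%:Z)).
have Hc o : Posz (cnt m o k) = if ((o <= k) && (m - o <= k))%N then Posz 'C(m, o) - Posz 'C(m, k.+1) else 0.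
  have := cnt_closed m o k; case: ifP => _ /= H; rewrite -?H ?addn0 //; lia.
under eq_bigr do rewrite Hc.
rewrite /Bsum.
pose H o := if (m - o <= k)%N then Posz 'C(m, o) - Posz 'C(m, k.+1) else 0.
have S1 : \sum_(o < m.+1) (if ((o <= k) && (m - o <= k))%N then Posz 'C(m, o) - Posz 'C(m, k.+1) else 0)
   = \sum_(0 <= o < k.+1) H o.
  rewrite -(big_mkord xpredT (fun o => if ((o <= k) && (m - o <= k))%N then Posz 'C(m, o) - Posz 'C(m, k.+1) else 0)).
  rewrite (big_nat_widen 0 m.+1 (m + k.+1)); last by lia.
  rewrite (big_nat_widen 0 k.+1 (m + k.+1)); last by lia.
  rewrite big_mkcond [in RHS]big_mkcond /=; apply: eq_big_nat => o Ho.
  rewrite /H !ltnS; case: (leqP o k) => Hok /=; case: (leqP o m) => Hom //=.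
  have -> : (m - o <= k)%N by lia.
  rewrite (bin_small Hom) (@bin_small m k.+1) //; lia.
rewrite S1.
rewrite big_nat_rev /= add0n.
transitivity (\sum_(1 <= a < k.+2) H (k.+1 - a)%N).
  by rewrite (big_addn 0 k.+2 1) subn1 /=; apply: eq_big_nat => i _; rewrite addn1.
rewrite (big_nat_widen 1 k.+2 (k.+2 + 2 * k.+1)); last by lia.
rewrite (big_nat_widen 1 (2 * k.+1 - m) (k.+2 + 2 * k.+1)); last by lia.
rewrite big_mkcond [in RHS]big_mkcond /=; apply: eq_big_nat => a Ha.
rewrite binz_sub /H.
case: (leqP a k.+1) => Hak.
  rewrite ltnS Hak.
  case: ifP => C1; case: ifP => C2 //; lia.
rewrite ltnS leqNgt Hak /=.
case: ifP => C2 //; rewrite bin_small; lia.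
Qed.


Open Scope nat_scope.

Definition Zs (w : seq bool) := [seq i <- iota 0 (size w) | ~~ nth false w i].
Definition Os (w : seq bool) := [seq i <- iota 0 (size w) | nth false w i].

Lemma Fw_iota w p : p <= size w -> Fw w p =
  count (fun i => ~~ nth false w i) (iota 0 p) + count (fun i => nth false w i) (iota p (size w - p)).
Proof.
move=> Hp; rewrite /Fw. have -> : drop p w = [seq nth false w k | k <- iota p (size w - p)].
  by rewrite map_nth_iota // take_oversize // size_drop.
rewrite -(map_nth_iota0 false Hp).
by rewrite !count_map.
Qed.

Lemma pw_iota a n : pairwise ltn (iota a n).
Proof. rewrite -sorted_pairwise ?iota_ltn_sorted //; exact: ltn_trans. Qed.

Lemma core_back k w : Big k w ->
  exists t, [/\ subseq t (Zs w ++ Os w), pairwise ltn t & size t = k].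
Proof.
move/hasP => [p]; rewrite mem_iota /= ltnS => Hp Hk.
set t1 := [seq i <- iota 0 p | ~~ nth false w i].
set t2 := [seq i <- iota p (size w - p) | nth false w i].
have Ht : subseq (t1 ++ t2) (Zs w ++ Os w).
  rewrite /Zs /Os -{1 2}(subnKC Hp) iotaD !filter_cat add0n.
  apply: cat_subseq; [exact: prefix_subseq | exact: suffix_subseq].
have Hpw : pairwise ltn (t1 ++ t2).
  rewrite pairwise_cat (pairwise_filter _ (pw_iota 0 p)) (pairwise_filter _ (pw_iota p _)) !andbT.
  apply/allrelP => x y; rewrite !mem_filter !mem_iota => /andP [_ /andP [_ Hx]] /andP [_ /andP [Hy _]].
  rewrite add0n in Hx; exact: leq_trans Hx Hy.
have Hs : k <= size (t1 ++ t2) by rewrite size_cat !size_filter -Fw_iota.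
exists (take k (t1 ++ t2)); split.
- exact: subseq_trans (take_subseq _ _) Ht.
- exact: subseq_pairwise (take_subseq _ _) Hpw.
- rewrite size_take; case: ltnP => //; lia.
Qed.

Lemma core_fwd k w t : subseq t (Zs w ++ Os w) -> pairwise ltn t -> k <= size t -> Big k w.
Proof.
move=> /subseqP [msk Hsz ->] Hpw Hk.
have Hsz1 : size (take (size (Zs w)) msk) = size (Zs w).
  rewrite size_take Hsz size_cat; case: ltnP => // H; apply/eqP; by rewrite eqn_leq H leq_addr.
move: Hpw Hk; rewrite -(cat_take_drop (size (Zs w)) msk) mask_cat //.
set t1 := mask _ (Zs w); set t2 := mask _ (Os w).
rewrite pairwise_cat => /and3P [Hrel Hp1 Hp2] Hk.
set p := head (size w) t2.
have Ht2 : forall x, x \in t2 -> x < size w /\ nth false w x.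
  move=> x /mem_mask; rewrite mem_filter mem_iota /= => /andP [-> ->]; done.
have Ht1 : forall x, x \in t1 -> x < size w /\ ~~ nth false w x.
  move=> x /mem_mask; rewrite mem_filter mem_iota /= => /andP [-> ->]; done.
have Hp : p <= size w.
  rewrite /p; case E: t2 => [|h r] //=.
  by case: (Ht2 h); rewrite ?E ?mem_head // => /ltnW.
have S1 : size t1 <= count (fun i => ~~ nth false w i) (iota 0 p).
  rewrite -size_filter; apply: uniq_leq_size.
    by apply: (pairwise_uniq _ Hp1) => x; exact: ltnn.
  move=> x Hx; case: (Ht1 x Hx) => Hxw Hxn; rewrite mem_filter Hxn mem_iota /=.
  rewrite /p; case E: t2 => [|h r] //=.
  by move/allrelP: Hrel => /(_ x h Hx); rewrite E mem_head => /(_ isT).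
have S2 : size t2 <= count (fun i => nth false w i) (iota p (size w - p)).
  rewrite -size_filter; apply: uniq_leq_size.
    by apply: (pairwise_uniq _ Hp2) => x; exact: ltnn.
  move=> x Hx; case: (Ht2 x Hx) => Hxw Hxn; rewrite mem_filter Hxn mem_iota /= subnKC //.
  rewrite Hxw andbT /p; move: Hx Hp2; case E: t2 => [|h r] //=.
  rewrite inE => /orP [/eqP -> //|Hx] /andP [/allP Ha _].
  exact: ltnW (Ha x Hx).
apply/hasP; exists p; first by rewrite mem_iota.
rewrite Fw_iota //; rewrite size_cat in Hk; exact: leq_trans Hk (leq_add S1 S2).
Qed.

Lemma descents_cons2 x y u : descents [:: x, y & u] = (y < x) + descents (y :: u).
Proof. by rewrite /descents [size _]/= iotaS0 /= count_map. Qed.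

Lemma descents1 x : descents [:: x] = 0.
Proof. by []. Qed.

Lemma descents0_sorted u : descents u = 0 -> sorted leq u.
Proof.
elim: u => [|x u IH] //; case: u IH => [|y u] IH //.
rewrite descents_cons2 => H.
have Hxy : x <= y by move: H; case: ltnP.
rewrite /= Hxy /=; apply: IH; lia.
Qed.

Lemma sorted_descents0 u : sorted leq u -> descents u = 0.
Proof.
elim: u => [|x u IH] //; case: u IH => [|y u] IH //.
rewrite descents_cons2 /= => /andP [Hxy Hp].
rewrite ltnNge Hxy /=; exact: IH.
Qed.

Lemma descents_cat A Bs : sorted leq A -> sorted leq Bs -> descents (A ++ Bs) <= 1.
Proof.
elim: A => [|x A IH] /=; first by move=> _ /sorted_descents0 ->.
case: A IH => [|y A] IH /=.
  move=> _; case: Bs {IH} => [|y Bs] //= HB; rewrite descents_cons2 sorted_descents0 //; by case: (y < x).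
move=> /andP [Hxy HA] HB; rewrite descents_cons2 ltnNge Hxy /=; exact: IH.
Qed.

Lemma descents_split u : descents u <= 1 ->
  exists d, sorted leq (take d u) /\ sorted leq (drop d u).
Proof.
elim: u => [|x u IH]; first by exists 0.
case: u IH => [|y u] IH; first by exists 0.
rewrite descents_cons2; case: ltnP => Hxy /= H.
  exists 1; split => //=. apply: (descents0_sorted (u := y :: u)); lia.
case: IH => [|d [H1 H2]]; first lia.
exists d.+1; split => //=.
case: d H1 H2 => [|d] //= H1 _; by rewrite Hxy.
Qed.

Lemma descents_map_S u : descents (map S u) = descents u.
Proof.
elim: u => [|x u IH] //; case: u IH => [|y u] IH //.
by rewrite map_cons map_cons descents_cons2 -map_cons IH descents_cons2 ltnS.
Qed.

Lemma oiso t k : order_iso t (iota 1 k) = (size t == k) && pairwise ltn t.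
Proof.
rewrite /order_iso size_iota; case: eqP => //= Hs.
apply/forallP/idP => [H|H i].
  apply/(pairwiseP 0) => i j; rewrite !inE => Hi Hj Hij.
  rewrite Hs in Hi Hj.
  move/forallP: (H (Ordinal Hi)) => /(_ (Ordinal Hj)) /eqP /=.
  rewrite !nth_iota // => ->; by rewrite ltn_add2l.
apply/forallP => j; have Hi := ltn_ord i; have Hj := ltn_ord j.
rewrite !nth_iota // ltn_add2l.
move/(pairwiseP 0): H => H.
case: (ltngtP i j) => [Hij|Hij|/val_inj ->]; last by rewrite ltnn.
- apply/eqP; apply: H; by rewrite // inE Hs.
- apply/eqP/negbTE; rewrite -leqNgt ltnW //.
  apply: H; by rewrite // inE Hs.
Qed.

Lemma contains_idP k u :
  reflect (exists t, [/\ subseq t u, pairwise ltn t & size t = k]) (contains (id_pat k) u).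
Proof.
apply: (iffP existsP) => [[msk]|[t [/subseqP [msk Hsz ->] Hp Hs]]].
  rewrite oiso => /andP [/eqP Hs Hp]; exists (mask msk u); split => //; exact: mask_subseq.
exists (@Tuple (size u) bool msk (introT eqP Hsz)); by rewrite oiso /= Hs eqxx.
Qed.

Definition Lw (w : seq bool) := Zs w ++ Os w.

Lemma perm_L w : perm_eq (Lw w) (iota 0 (size w)).
Proof. by rewrite /Lw /Zs /Os perm_catC; apply: permEl; apply: (perm_filterC (fun i => nth false w i)). Qed.

Lemma size_L w : size (Lw w) = size w.
Proof. by rewrite (perm_size (perm_L w)) size_iota. Qed.

Lemma uniq_L w : uniq (Lw w).
Proof. by rewrite (perm_uniq (perm_L w)) iota_uniq. Qed.

Lemma mem_L w x : (x \in Lw w) = (x < size w).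
Proof. by rewrite (perm_mem (perm_L w)) mem_iota. Qed.

Lemma L_lt m (w : m.-tuple bool) (i : 'I_m) : nth 0 (Lw w) i < m.
Proof.
have Hi : i < size (Lw w) by rewrite size_L size_tuple.
by have := mem_nth 0 Hi; rewrite mem_L size_tuple.
Qed.

Definition gfun m (w : m.-tuple bool) (i : 'I_m) : 'I_m := Ordinal (L_lt w i).

Lemma gfun_inj m (w : m.-tuple bool) : injective (gfun w).
Proof.
move=> i j /(congr1 val) /= /eqP; rewrite nth_uniq ?uniq_L ?size_L ?size_tuple //.
by move/eqP/val_inj.
Qed.

Definition g m (w : m.-tuple bool) : {perm 'I_m} := perm (@gfun_inj m w).

Lemma perm_word_g m (w : m.-tuple bool) : perm_word (g w) = map S (Lw w).
Proof.
rewrite /perm_word.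
have -> : [seq (g w i).+1 | i <- enum 'I_m] = map S [seq nth 0 (Lw w) j | j <- map val (enum 'I_m)].
  by rewrite -!map_comp; apply: eq_map => i /=; rewrite permE.
rewrite val_enum_ord map_nth_iota0 ?take_oversize // size_L size_tuple //.
Qed.

Lemma grass_g m (w : m.-tuple bool) : grassmannian (g w).
Proof.
rewrite /grassmannian perm_word_g descents_map_S /Lw; apply: descents_cat.
  rewrite sorted_filter //; [exact: leq_trans | exact: iota_sorted].
rewrite sorted_filter //; [exact: leq_trans | exact: iota_sorted].
Qed.

Lemma contains_g k m (w : m.-tuple bool) :
  contains (id_pat k) (perm_word (g w)) = Big k w.
Proof.
rewrite perm_word_g; apply/contains_idP/idP.
  move=> [t [/subseqP [msk Hsz ->] Hp Hs]].
  apply: (@core_fwd k w (mask msk (Lw w))).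
  - exact: mask_subseq.
  - by move: Hp; rewrite -map_mask pairwise_map.
  - by rewrite -Hs -map_mask size_map.
move/core_back => [t [Hsub Hp Hs]]; exists (map S t); split.
- exact: map_subseq.
- by rewrite pairwise_map.
- by rewrite size_map.
Qed.

Lemma inj_aux (Z1 O1 Z2 O2 : seq nat) : Z1 ++ O1 = Z2 ++ O2 -> size Z1 < size Z2 ->
  pairwise ltn Z2 -> pairwise ltn O1 -> pairwise ltn (Z1 ++ O1).
Proof.
move=> E Hs HZ2 HO1.
have HT : take (size Z1) Z2 = Z1.
  by rewrite -(takel_cat O2 (ltnW Hs)) -E take_size_cat.
have HD : O1 = drop (size Z1) Z2 ++ O2.
  by rewrite -(drop_size_cat O1 (erefl (size Z1))) E drop_cat Hs.
set X := drop (size Z1) Z2 in HD.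
have HX : size X > 0 by rewrite size_drop subn_gt0.
move: HZ2; rewrite -(cat_take_drop (size Z1) Z2) HT -/X pairwise_cat => /and3P [R1 P1 _].
move: (HO1); rewrite HD pairwise_cat => /and3P [R2 _ _].
rewrite pairwise_cat P1 -HD HO1 andbT /= HD allrel_catr R1 /=.
rewrite andbT; apply/allrelP => z o Hz Ho.
case E2: X HX R1 R2 => [|x X'] // _ R1 R2.
apply: (@ltn_trans x).
  by move/allrelP: R1 => /(_ z x Hz (mem_head _ _)).
by move/allrelP: R2 => /(_ x o (mem_head _ _) Ho).
Qed.

Lemma pw_Z w : pairwise ltn (Zs w).
Proof. exact: pairwise_filter (pw_iota _ _). Qed.
Lemma pw_O w : pairwise ltn (Os w).
Proof. exact: pairwise_filter (pw_iota _ _). Qed.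

Lemma g_inj k m : k <= m -> {in [set w : m.-tuple bool | ~~ Big k w] &, injective (@g m)}.
Proof.
move=> Hkm w1 w2; rewrite !inE => H1 H2 E.
have EL : Lw w1 = Lw w2.
  by apply: (inj_map succn_inj); rewrite -!perm_word_g E.
have Hbig : forall (w w' : m.-tuple bool), Lw w = Lw w' -> size (Zs w) < size (Zs w') -> Big k w.
  move=> w w' EE Hs; apply: (@core_fwd k w (Lw w)) => //.
  - exact: inj_aux EE Hs (pw_Z _) (pw_O _).
  - by rewrite size_L size_tuple.
case: (ltngtP (size (Zs w1)) (size (Zs w2))) => Hs.
- by move: H1; rewrite (Hbig w1 w2 EL Hs).
- by move: H2; rewrite (Hbig w2 w1 (esym EL) Hs).
have EZ : Zs w1 = Zs w2.
  have := congr1 (take (size (Zs w1))) EL; rewrite /Lw take_size_cat // Hs take_size_cat //.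
apply: val_inj; apply: (@eq_from_nth _ false); first by rewrite !size_tuple.
move=> i; rewrite size_tuple => Hi.
have := congr1 (fun s => i \in s) EZ; rewrite /= !mem_filter !mem_iota !size_tuple Hi /= andbT.
rewrite andbT; exact: negb_inj.
Qed.


Lemma perm_word_inj m : injective (@perm_word m).
Proof.
move=> s1 s2 E; apply/permP => i; have := congr1 (fun l => nth 0 l i) E.
rewrite /perm_word !(nth_map i) -?enumT ?size_enum_ord // nth_ord_enum => [[H]].
exact: val_inj.
Qed.

Lemma g_surj m (s : {perm 'I_m}) : grassmannian s -> exists w : m.-tuple bool, g w = s.
Proof.
set u0 := [seq val (s i) | i <- enum 'I_m].
have Hpw : perm_word s = map S u0 by rewrite /perm_word /u0 -map_comp.
have Hu : uniq u0.
  rewrite map_inj_uniq ?enum_uniq // => i j /val_inj; exact: perm_inj.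
have Hmem : forall x, (x \in u0) = (x < m).
  move=> x; apply/mapP/idP => [[i _ ->]|Hx]; first exact: ltn_ord.
  by exists ((s^-1)%g (Ordinal Hx)); rewrite ?mem_enum // permKV.
rewrite /grassmannian Hpw descents_map_S => /descents_split [d [H1 H2]].
set A := take d u0 in H1; set Bs := drop d u0 in H2.
have HuAB : uniq (A ++ Bs) by rewrite cat_take_drop.
have HA : sorted ltn A by rewrite ltn_sorted_uniq_leq H1 take_uniq.
have HB : sorted ltn Bs by rewrite ltn_sorted_uniq_leq H2 drop_uniq.
have Hsz : size [seq v \in Bs | v <- iota 0 m] == m by rewrite size_map size_iota.
set w := Tuple Hsz.
have Hnth : forall x, x < m -> nth false w x = (x \in Bs).
  by move=> x Hx; rewrite /= (nth_map 0) ?size_iota // nth_iota.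
have HmemAB : forall x, x < m -> (x \in A) = (x \notin Bs).
  move=> x Hx; move: HuAB; rewrite cat_uniq => /and3P [_ Hn _].
  have : x \in A ++ Bs by rewrite cat_take_drop Hmem.
  rewrite mem_cat; case HxA: (x \in A); case HxB: (x \in Bs) => //= _.
  by move/hasP: Hn; case; exists x.
have HltA : forall x, x \in A -> x < m.
  by move=> x Hx; rewrite -Hmem -(cat_take_drop d u0) mem_cat Hx.
have HltB : forall x, x \in Bs -> x < m.
  by move=> x Hx; rewrite -Hmem -(cat_take_drop d u0) mem_cat Hx orbT.
exists w; apply: perm_word_inj; rewrite perm_word_g Hpw; congr (map S _).
rewrite -(cat_take_drop d u0) /Lw; congr (_ ++ _).
  apply: (irr_sorted_eq ltn_trans ltnn) => //.
    by apply: sorted_filter; [exact: ltn_trans | exact: iota_ltn_sorted].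
  move=> x; rewrite mem_filter mem_iota size_tuple /=.
  case: (ltnP x m) => Hx; last by rewrite andbF; apply/esym/negP => /HltA; rewrite ltnNge Hx.
  by rewrite andbT Hnth // HmemAB.
apply: (irr_sorted_eq ltn_trans ltnn) => //.
  by apply: sorted_filter; [exact: ltn_trans | exact: iota_ltn_sorted].
move=> x; rewrite mem_filter mem_iota size_tuple /=.
case: (ltnP x m) => Hx; last by rewrite andbF; apply/esym/negP => /HltB; rewrite ltnNge Hx.
by rewrite andbT Hnth.
Qed.

Lemma part2 k m : k <= m ->
  #|[set s : {perm 'I_m} | grassmannian s && avoids (id_pat k) (perm_word s)]| = B k m.
Proof.
move=> Hkm.
have -> : [set s : {perm 'I_m} | grassmannian s && avoids (id_pat k) (perm_word s)]
   = (@g m) @: [set w : m.-tuple bool | ~~ Big k w].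
  apply/setP => s; rewrite inE; apply/andP/imsetP.
  - case=> Hg Ha; case: (g_surj Hg) => w Hw; exists w => //.
    by rewrite inE -contains_g Hw.
  - case=> w; rewrite inE => Hw ->; split; first exact: grass_g.
    by rewrite /avoids contains_g.
rewrite card_in_imset; last exact: g_inj.
rewrite /B; apply: eq_card => w; by rewrite !inE avoids_Pb Pb_Big.
Qed.

Unset Implicit Arguments.
Close Scope ring_scope.
Theorem mainTheorem7 (k m : nat) (hk : (1 <= k)%N) (hm : (1 <= m)%N) :
  Posz (B k m) = Bsum k m /\
  ((2 <= k)%N -> (k <= m)%N ->
    Posz #|[set s : {perm 'I_m} | grassmannian s && avoids (id_pat k) (perm_word s)]|
    = Bsum k m).
Proof.
split; first exact: part1.
by move=> _ Hkm; rewrite part2 //; exact: part1.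
Qed.
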